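(* Let $d\ge1$, let $G$ be a graph with a nonedge $f=uv$, let $C$ be a clique separator of $G\cup f$, and let $G_1,\dots,G_k$ be the $C$-components of $G\cup f$ that contain both $u$ and $v$. Then $(G,f)$ has the $d$-SIP if and only if $(G_i\setminus f,f)$ has the $d$-SIP for every $i$.
   Context: A linkage $(G,\ell)$: finite simple graph $G$ and $\ell:E(G)\to\mathbb{R}_{\ge0}$ (squared lengths). A $d$-realization is $p:V(G)\to\mathbb{R}^d$ with $\|p(a)-p(b)\|^2=\ell(ab)$ for all $ab\in E(G)$; $\mathcal{C}^d(G,\ell)$ is the set of these. For a nonedge $f=uv$, $\Omega^d_f(G,\ell)=\{\|p(u)-p(v)\|^2:p\in\mathcal{C}^d(G,\ell)\}$; $(G,f)$ has the $d$-SIP if $\Omega^d_f(G,\ell)$ is convex (empty or a closed interval) for every $\ell$. $G\cup f$ adds $f$ as an edge; $H\setminus f$ deletes the edge $f$. A clique is a set of pairwise adjacent vertices; a clique separator of $H$ is a clique $C$ such that $H-C$ has at least two connected components. The $C$-components of $H$ are the subgraphs induced by $V(K)\cup C$ for the connected components $K$ of $H-C$. *)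

(* Defs.v *)
From mathcomp Require Import all_boot all_order all_algebra.
From mathcomp Require Import reals.
Set Implicit Arguments. Unset Strict Implicit. Unset Printing Implicit Defensive.
Import Order.TTheory GRing.Theory Num.Theory.
Local Open Scope ring_scope.

Definition sqdist (R : realType) (d : nat) (x y : 'rV[R]_d) : R :=
  \sum_(i < d) (x ord0 i - y ord0 i) ^+ 2.

(* A graph on vertex set S (a subset of the finite type V) with edge
   relation E (only edges with both ends in S count).
   l : squared edge lengths. *)
Definition realization (R : realType) (d : nat) (V : finType)
  (S : {set V}) (E : rel V) (l : V -> V -> R) (p : V -> 'rV[R]_d) : Prop :=
  forall a b, a \in S -> b \in S -> E a b -> sqdist (p a) (p b) = l a b.

Definition Omega (R : realType) (d : nat) (V : finType)
  (S : {set V}) (E : rel V) (l : V -> V -> R) (u v : V) : R -> Prop :=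
  fun t => exists p : V -> 'rV[R]_d, realization S E l p /\ sqdist (p u) (p v) = t.

Definition convexR (R : realType) (A : R -> Prop) : Prop :=
  forall x y z, A x -> A y -> x <= z -> z <= y -> A z.

(* (G, f) has the d-SIP: Omega is convex for every length function
   l : E(G) -> R_{>=0}, encoded as a symmetric nonnegative l : V -> V -> R
   (values off edges are irrelevant). *)
Definition SIP (R : realType) (d : nat) (V : finType)
  (S : {set V}) (E : rel V) (u v : V) : Prop :=
  forall l : V -> V -> R, (forall a b, l a b = l b a) -> (forall a b, 0 <= l a b) ->
    convexR (Omega d S E l u v).

Definition add_edge (V : finType) (E : rel V) (u v : V) : rel V :=
  fun a b => [|| E a b, (a == u) && (b == v) | (a == v) && (b == u)].

Definition del_verts (V : finType) (E : rel V) (C : {set V}) : rel V :=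
  fun a b => [&& E a b, a \notin C & b \notin C].

Definition is_clique (V : finType) (E : rel V) (C : {set V}) : Prop :=
  forall a b, a \in C -> b \in C -> a != b -> E a b.

Definition clique_separator (V : finType) (E : rel V) (C : {set V}) : Prop :=
  is_clique E C /\
  exists x y, [/\ x \notin C, y \notin C & ~~ connect (del_verts E C) x y].

(* vertex set of the C-component of H determined by the component of H - C
   containing x (x \notin C) *)
Definition Ccomp (V : finType) (E : rel V) (C : {set V}) (x : V) : {set V} :=
  [set y | connect (del_verts E C) x y] :|: C.

Definition induced_del (V : finType) (E : rel V) (S : {set V}) (u v : V) : rel V :=
  fun a b => [&& a \in S, b \in S, E a b &
              ~~ (((a == u) && (b == v)) || ((a == v) && (b == u)))].

(* Main.v *)
Require Import Defs.
From mathcomp Require Import all_boot all_order all_algebra.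
From mathcomp Require Import reals.
From mathcomp Require Import ring lra.
From Stdlib Require IndefiniteDescription.
Set Implicit Arguments. Unset Strict Implicit. Unset Printing Implicit Defensive.
Import Order.TTheory GRing.Theory Num.Theory.
Local Open Scope ring_scope.

Section Geo.
Variables (R : realType) (d : nat).
Implicit Types x y z w a b n A B : 'rV[R]_d.

Definition dot x y : R := \sum_(i < d) x ord0 i * y ord0 i.

Lemma dotC x y : dot x y = dot y x.
Proof. by apply: eq_bigr => i _; rewrite mulrC. Qed.

Lemma dotBl x y z : dot (x - y) z = dot x z - dot y z.
Proof.
rewrite /dot -sumrB; apply: eq_bigr => i _; rewrite !mxE; ring.
Qed.

Lemma dotDl x y z : dot (x + y) z = dot x z + dot y z.
Proof.
rewrite /dot -big_split /=; apply: eq_bigr => i _; rewrite !mxE; ring.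
Qed.

Lemma dotZl k x z : dot (k *: x) z = k * dot x z.
Proof.
rewrite /dot mulr_sumr; apply: eq_bigr => i _; rewrite !mxE; ring.
Qed.

Lemma dotNl x z : dot (- x) z = - dot x z.
Proof. by rewrite -sub0r dotBl /dot big1 ?sub0r // => i _; rewrite mxE mul0r. Qed.

Lemma dotNr x z : dot z (- x) = - dot z x.
Proof. by rewrite dotC dotNl dotC. Qed.

Lemma dotBr x y z : dot z (x - y) = dot z x - dot z y.
Proof. by rewrite dotC dotBl dotC [dot y z]dotC. Qed.

Lemma dotZr k x z : dot z (k *: x) = k * dot z x.
Proof. by rewrite dotC dotZl dotC. Qed.

Lemma sqdistE x y : sqdist x y = dot (x - y) (x - y).
Proof. by apply: eq_bigr => i _; rewrite !mxE expr2. Qed.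

Lemma sqdistC x y : sqdist x y = sqdist y x.
Proof. by apply: eq_bigr => i _; rewrite -sqrrN opprB. Qed.

Lemma sqdist_ge0 x y : 0 <= sqdist x y.
Proof. by apply: sumr_ge0 => i _; rewrite sqr_ge0. Qed.

Lemma sqdistxx x : sqdist x x = 0.
Proof. by rewrite /sqdist big1 // => i _; rewrite subrr expr0n. Qed.

Lemma sqdist_eq0 x y : sqdist x y = 0 -> x = y.
Proof.
move=> h; apply/rowP => j.
have H := @psumr_eq0P _ _ xpredT (fun i => (x ord0 i - y ord0 i) ^+ 2) (fun i _ => sqr_ge0 _) h.
have := H j isT.
by move/eqP; rewrite sqrf_eq0 subr_eq0 => /eqP.
Qed.

Definition isom (T : 'rV[R]_d -> 'rV[R]_d) := forall x y, sqdist (T x) (T y) = sqdist x y.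


Definition refl z y w := w - ((sqdist w y - sqdist w z) / sqdist z y) *: (z - y).

Lemma refl_isom z y : sqdist z y != 0 -> isom (refl z y).
Proof.
move=> nz a b; rewrite /refl !sqdistE in nz *.
rewrite !(dotBl, dotBr, dotZl, dotZr, dotDl, dotNl, dotNr).
rewrite ?(dotC y a) ?(dotC z a) ?(dotC y b) ?(dotC z b) ?(dotC b a) ?(dotC z y).
rewrite ?(dotC y a) ?(dotC z a) ?(dotC y b) ?(dotC z b) ?(dotC b a) ?(dotC z y).
rewrite ?(dotBl, dotBr, dotZl, dotZr, dotDl) in nz.
rewrite ?(dotC z y) in nz.
field. exact: nz.
Qed.

Lemma refl_z z y : sqdist z y != 0 -> refl z y z = y.
Proof.
move=> nz; rewrite /refl sqdistxx subr0 divff // scale1r; by rewrite opprB addrC subrK.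
Qed.

Lemma refl_fix z y w : sqdist w y = sqdist w z -> refl z y w = w.
Proof. by move=> h; rewrite /refl h subrr mul0r scale0r subr0. Qed.

Lemma isom_comp T1 T2 : isom T1 -> isom T2 -> isom (T1 \o T2).
Proof. by move=> h1 h2 a b /=; rewrite h1 h2. Qed.

Lemma isom_ext (V : eqType) (s : seq V) (p q : V -> 'rV[R]_d) :
  (forall va vb, va \in s -> vb \in s -> sqdist (p va) (p vb) = sqdist (q va) (q vb)) ->
  exists T, isom T /\ forall va, va \in s -> T (p va) = q va.
Proof.
elim: s => [|vc s IH] h.
  by exists id; split.
have [T' [iT' hT']] : exists T, isom T /\ forall va, va \in s -> T (p va) = q va.
  by apply: IH => va vb ha hb; apply: h; rewrite inE ?ha ?hb orbT.
set z := T' (p vc).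
have eqd : forall vb, vb \in s -> sqdist (q vb) z = sqdist (q vb) (q vc).
  by move=> vb hb; rewrite /z -{1}(hT' vb hb) iT' h ?inE ?hb ?eqxx ?orbT.
have [zy|nz] := eqVneq (sqdist z (q vc)) 0.
  exists T'; split; first exact: iT'.
  move=> va; rewrite inE => /orP [/eqP ->|]; last exact: hT'.
  exact: sqdist_eq0.
exists (refl z (q vc) \o T'); split; first exact: isom_comp (refl_isom nz) iT'.
move=> va; rewrite inE => /orP [/eqP ->|ha] /=; first exact: refl_z.
by rewrite hT' // refl_fix // eqd.
Qed.


Lemma sq_line A B k : sqdist (A + k *: (B - A)) A = k ^+ 2 * sqdist A B.
Proof. by rewrite /sqdist mulr_sumr; apply: eq_bigr => i _; rewrite !mxE; ring. Qed.

Lemma sq_line2 A B k : sqdist (A + k *: (B - A)) B = (1 - k) ^+ 2 * sqdist A B.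
Proof. by rewrite /sqdist mulr_sumr; apply: eq_bigr => i _; rewrite !mxE; ring. Qed.

Lemma sq_const A c : sqdist (A + const_mx c) A = c ^+ 2 * d%:R.
Proof.
rewrite /sqdist (eq_bigr (fun _ => c ^+ 2)) ?sumr_const ?card_ord ?mulr_natr //.
by move=> i _; rewrite !mxE addrAC subrr add0r.
Qed.

Lemma two_point (A1 B1 A3 B3 : 'rV[R]_d) : (0 < d)%N -> sqdist A1 B1 <= sqdist A3 B3 ->
  exists w1 w3, sqdist w1 A1 = sqdist w3 A3 /\ sqdist w1 B1 = sqdist w3 B3.
Proof.
move=> d0 le13.
set t1 := sqdist A1 B1 in le13 *; set t3 := sqdist A3 B3 in le13 *.
have t1ge : 0 <= t1 by apply: sqdist_ge0.
have [t30|t3n0] := eqVneq t3 0.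
  exists A1, A3; rewrite !sqdistxx; split => //.
  by rewrite -/t1 -/t3 t30; apply/eqP; rewrite eq_le t1ge andbT -t30.
have t3gt : 0 < t3 by rewrite lt_def t3n0 sqdist_ge0.
set s1 := Num.sqrt t1; set s3 := Num.sqrt t3.
have e1 : t1 = s1 ^+ 2 by rewrite sqr_sqrtr.
have e3 : t3 = s3 ^+ 2 by rewrite sqr_sqrtr // ltW.
have s3n0 : s3 != 0 by rewrite sqrtr_eq0 -ltNge.
have s2n0 : (2 : R) != 0 by rewrite pnatr_eq0.
set lam := (s3 - s1) / (2 * s3).
have [t10|t1n0] := eqVneq t1 0.
  have A1B1 : A1 = B1 by apply: sqdist_eq0.
  have s10 : s1 = 0 by rewrite /s1 t10 sqrtr0.
  have dn0 : (d%:R : R) != 0 by rewrite pnatr_eq0 -lt0n.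
  set sd := Num.sqrt (d%:R : R).
  have sdn0 : sd != 0 by rewrite sqrtr_eq0 -ltNge ltr0n.
  have ed : (d%:R : R) = sd ^+ 2 by rewrite sqr_sqrtr // ler0n.
  exists (A1 + const_mx (s3 / (2 * sd))), (A3 + lam *: (B3 - A3)).
  rewrite -A1B1 sq_const sq_line sq_line2 -/t3 e3 /lam s10 ed; split; field.
    by rewrite ?sdn0 ?s3n0 ?s2n0 ?s1n0.
    by rewrite ?sdn0 ?s3n0 ?s2n0 ?s1n0.
have s1n0 : s1 != 0 by rewrite sqrtr_eq0 -ltNge lt_def t1n0 t1ge.
exists (A1 + (- (s3 - s1) / (2 * s1)) *: (B1 - A1)), (A3 + lam *: (B3 - A3)).
rewrite !sq_line !sq_line2 -/t1 -/t3 e1 e3 /lam; split; field.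
  by rewrite ?sdn0 ?s3n0 ?s2n0 ?s1n0.
  by rewrite ?sdn0 ?s3n0 ?s2n0 ?s1n0.
Qed.

End Geo.

Lemma choice_fun (A B : Type) (P : A -> B -> Prop) :
  (forall a, exists b, P a b) -> exists f, forall a, P a (f a).
Proof.
move=> h; exists (fun a => proj1_sig (IndefiniteDescription.constructive_indefinite_description _ (h a))).
by move=> a; case: (IndefiniteDescription.constructive_indefinite_description _ (h a)).
Qed.

Section Main.
Variables (R : realType) (d : nat) (V : finType) (adj : rel V) (u v : V) (C : {set V}).
Hypotheses (adjS : symmetric adj) (nuv : ~~ adj u v).

Local Notation H := (add_edge adj u v).
Local Notation e := (del_verts (add_edge adj u v) C).
Local Notation K x := (Ccomp (add_edge adj u v) C x).

Lemma HS : symmetric H.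
Proof.
move=> a b; rewrite /add_edge adjS.
by case: (adj b a); case: (a == u); case: (a == v); case: (b == u); case: (b == v).
Qed.

Lemma eS : symmetric e.
Proof.
move=> a b; rewrite /del_verts HS.
by case: (H b a); case: (a \in C); case: (b \in C).
Qed.

Lemma cS : connect_sym e.
Proof. exact: sym_connect_sym eS. Qed.

Lemma conn_C y a : connect e y a -> y \in C -> y = a.
Proof.
move=> /connectP [[|p1 p] /= hp ->] // yC.
by move: hp; rewrite /del_verts yC /= andbF.
Qed.

Lemma conn_notC a y : connect e a y -> a \notin C -> y \notin C.
Proof.
move=> c aC; apply/negP => yC; rewrite cS in c.
by have := conn_C c yC => ya; move: aC; rewrite -ya yC.
Qed.

Lemma K_eq x y : connect e x y -> K x = K y.
Proof. by move=> c; apply/setP => z; rewrite !inE (same_connect cS c). Qed.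

Lemma CK x c : c \in C -> c \in K x.
Proof. by move=> h; rewrite !inE h orbT. Qed.

Lemma selfK x : x \in K x.
Proof. by rewrite !inE connect0. Qed.

Lemma rootK a : a \in K (fingraph.root e a).
Proof. by rewrite !inE cS connect_root. Qed.

Lemma root_notC a : a \notin C -> fingraph.root e a \notin C.
Proof. by move=> aC; apply: conn_notC (connect_root _ _) aC. Qed.

Lemma edge_e a b : H a b -> a \notin C -> b \notin C -> e a b.
Proof. by move=> h aC bC; rewrite /del_verts h aC bC. Qed.

Lemma out_edge x a b : a \notin K x -> b \in K x -> adj a b -> b \in C.
Proof.
move=> aK; rewrite !inE => /orP [cb|//] ab; apply: contraT => bC.
have aC : a \notin C by apply: contra aK => h; rewrite !inE h orbT.
move: aK; rewrite !inE negb_or => /andP [/negP nc _]; case: nc.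
apply: connect_trans cb (connect1 _); apply: edge_e => //.
by rewrite /add_edge adjS ab.
Qed.

Lemma Eedge (S : {set V}) a b : a \in S -> b \in S -> adj a b -> induced_del H S u v a b.
Proof.
move=> aS bS ab; rewrite /induced_del aS bS /add_edge ab /=.
apply/negP => /orP [] /andP [/eqP au /eqP bv]; move: ab; rewrite au bv => ab.
  by move: nuv; rewrite ab.
by move: nuv; rewrite adjS ab.
Qed.

Lemma Eadj (S : {set V}) a b : induced_del H S u v a b -> adj a b.
Proof.
by rewrite /induced_del /add_edge => /and4P [_ _ /orP [//|h] /negP nh]; case: nh.
Qed.


Local Notation E x := (induced_del (add_edge adj u v) (Ccomp (add_edge adj u v) C x) u v).

Lemma keyW x (l : V -> V -> R) (q1 q3 : V -> 'rV[R]_d) :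
  is_clique H C -> (0 < d)%N ->
  realization (K x) (E x) l q1 -> realization (K x) (E x) l q3 ->
  sqdist (q1 u) (q1 v) <= sqdist (q3 u) (q3 v) ->
  exists w1 w3, forall c, c \in C -> sqdist w1 (q1 c) = sqdist w3 (q3 c).
Proof.
move=> clq d0 r1 r3 le.
case: (pickP (fun c => [&& c \in C, c != u & c != v])) => [c0 /and3P [c0C c0u c0v] | none].
  exists (q1 c0), (q3 c0) => c cC.
  have [<-|nc] := eqVneq c0 c; first by rewrite !sqdistxx.
  have Ec : E x c0 c.
    by rewrite /induced_del !CK // (clq c0 c c0C cC nc) /= (negbTE c0u) (negbTE c0v).
  by rewrite (r1 _ _ (CK _ c0C) (CK _ cC) Ec) (r3 _ _ (CK _ c0C) (CK _ cC) Ec).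
have allC : forall c, c \in C -> c = u \/ c = v.
  move=> c cC; have := none c; rewrite cC /=.
  by case: eqVneq => [->|_]; [left | case: eqVneq => [->|//]; right].
case uC: (u \in C); case vC: (v \in C).
- have [w1 [w3 [h1 h2]]] := two_point d0 le.
  by exists w1, w3 => c /allC [] ->.
- exists (q1 u), (q3 u) => c cC; have [ec|ec] := allC c cC; first by rewrite ec !sqdistxx.
  by move: cC; rewrite ec vC.
- exists (q1 v), (q3 v) => c cC; have [ec|ec] := allC c cC; last by rewrite ec !sqdistxx.
  by move: cC; rewrite ec uC.
- exists 0, 0 => c cC; have [ec|ec] := allC c cC; by move: cC; rewrite ec ?uC ?vC.
Qed.

Lemma dir1 : (0 < d)%N -> is_clique H C -> SIP R d [set: V] adj u v ->
  forall x, u \in K x -> v \in K x -> SIP R d (K x) (E x) u v.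
Proof.
move=> d0 clq sipG x uK vK l lS l0 t1 t3 t [q1 [r1 e1]] [q3 [r3 e3]] le1 le3.
have le13 : sqdist (q1 u) (q1 v) <= sqdist (q3 u) (q3 v).
  by rewrite e1 e3; apply: le_trans le1 le3.
have [w1 [w3 hw]] := keyW clq d0 r1 r3 le13.
pose W1 a := if a \in K x then q1 a else w1.
pose W3 a := if a \in K x then q3 a else w3.
pose l' a b := if (a \in K x) && (b \in K x) then l a b else sqdist (W1 a) (W1 b).
have l'S : forall a b, l' a b = l' b a.
  by move=> a b; rewrite /l' andbC; case: ifP => _; [exact: lS | exact: sqdistC].
have l'0 : forall a b, 0 <= l' a b.
  by move=> a b; rewrite /l'; case: ifP => _; [exact: l0 | exact: sqdist_ge0].
have Om1 : Omega d [set: V] adj l' u v t1.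
  exists W1; split; last by rewrite /W1 uK vK.
  move=> a b _ _ ab; rewrite /l' /W1; case aK: (a \in K x); case bK: (b \in K x) => //=.
  exact: r1 aK bK (Eedge aK bK ab).
have Om3 : Omega d [set: V] adj l' u v t3.
  exists W3; split; last by rewrite /W3 uK vK.
  move=> a b _ _ ab; rewrite /l' /W1 /W3; case aK: (a \in K x); case bK: (b \in K x) => //=.
  - exact: r3 aK bK (Eedge aK bK ab).
  - have aC : a \in C by apply: (out_edge (negbT bK) aK); rewrite adjS.
    by rewrite sqdistC [sqdist (q1 a) _]sqdistC hw.
  - have bC : b \in C by apply: (out_edge (negbT aK) bK).
    by rewrite hw.
  - by rewrite !sqdistxx.
have [P [rP eP]] := sipG l' l'S l'0 t1 t3 t Om1 Om3 le1 le3.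
exists P; split => // a b aK bK Eab.
by rewrite (rP a b (in_setT a) (in_setT b) (Eadj Eab)) /l' aK bK.
Qed.

Lemma dir2 : is_clique H C -> (exists x0, x0 \notin C) ->
  (forall x, x \notin C -> u \in K x -> v \in K x -> SIP R d (K x) (E x) u v) ->
  SIP R d [set: V] adj u v.
Proof.
move=> clq [x0 x0C] hc l lS l0 t1 t3 t [p1 [r1 e1]] [p3 [r3 e3]] le1 le3.
have realE : forall (x : V) (p : V -> 'rV[R]_d), realization [set: V] adj l p -> realization (K x) (E x) l p.
  by move=> x p rp a b ha hb Eab; exact: (rp a b (in_setT a) (in_setT b) (Eadj Eab)).
have exQ : forall x : V, exists q : V -> 'rV[R]_d, x \notin C ->
    realization (K x) (E x) l q /\ (u \in K x -> v \in K x -> sqdist (q u) (q v) = t).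
  move=> x; case: (boolP ((u \in K x) && (v \in K x))) => [/andP [uK vK]|nuvK].
    case: (boolP (x \in C)) => xC; first by exists p1.
    have [q [rq eq]] := hc x xC uK vK l lS l0 t1 t3 t
      (ex_intro _ p1 (conj (realE x p1 r1) e1)) (ex_intro _ p3 (conj (realE x p3 r3) e3)) le1 le3.
    by exists q.
  exists p1 => _; split; first exact: realE.
  by move=> uK vK; move: nuvK; rewrite uK vK.
have [Q hQ] := choice_fun exQ.
set r := Q x0.
have Dval : forall y a b : V, y \notin C -> a \in C -> b \in C ->
    sqdist (Q y a) (Q y b) = if a == b then 0 else
      if ((a == u) && (b == v)) || ((a == v) && (b == u)) then t else l a b.
  move=> y a b yC aC bC; have [rQ eQ] := hQ y yC.
  have [<-|nab] := eqVneq a b; first exact: sqdistxx.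
  case: ifP => [/orP [] /andP [/eqP au /eqP bv]|nuvp].
  - by rewrite au bv; apply: eQ; apply: CK; [rewrite -au | rewrite -bv].
  - by rewrite au bv sqdistC; apply: eQ; apply: CK; [rewrite -bv | rewrite -au].
  - apply: rQ; [exact: CK aC | exact: CK bC |].
    by rewrite /induced_del !CK // (clq a b aC bC nab) nuvp.
have exT : forall y : V, exists T, isom T /\ (y \notin C -> forall c, c \in C -> T (Q y c) = r c).
  move=> y; case: (boolP (y \in C)) => yC.
    by exists id; split => // ? ?.
  have [T [iT hT]] := @isom_ext R d _ (enum C) (Q y) r
    (fun a b ha hb => ltac:(rewrite mem_enum in ha; rewrite mem_enum in hb;
                             rewrite /r !Dval //)).
  by exists T; split => // _ c cC; apply: hT; rewrite mem_enum.
have [TT hTT] := choice_fun exT.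
pose rt := fingraph.root (del_verts H C).
pose P a := if a \in C then r a else TT (rt a) (Q (rt a) a).
have Prep : forall y a : V, y \notin C -> (a \in C) || (rt a == y) -> P a = TT y (Q y a).
  move=> y a yC h; rewrite /P; case: ifP => aC; first by rewrite (proj2 (hTT y) yC a aC).
  by move: h; rewrite aC /= => /eqP ->.
have key : forall a b : V, H a b -> a \notin C -> exists y, [/\ y \notin C,
    P a = TT y (Q y a), P b = TT y (Q y b), a \in K y & b \in K y].
  move=> a b hab aC; exists (rt a).
  have yC := root_notC aC; have aK := rootK a.
  case: (boolP (b \in C)) => bC.
    by split => //; [apply: Prep; rewrite ?eqxx ?orbT | apply: Prep; rewrite ?bC | exact: CK].
  have eab := connect1 (edge_e hab aC bC).
  have rb : rt a = rt b by apply/(fingraph.rootP cS).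
  split => //; [apply: Prep => //; by rewrite eqxx orbT | apply: Prep => //; by rewrite -rb eqxx orbT |].
  rewrite !inE; apply/orP; left; apply: connect_trans eab.
  by rewrite cS connect_root.
have gen : forall a b : V, adj a b -> a \notin C -> sqdist (P a) (P b) = l a b.
  move=> a b ab aC; have hab : H a b by rewrite /add_edge ab.
  have [y [yC -> -> aK bK]] := key a b hab aC.
  by rewrite (proj1 (hTT y)) (proj1 (hQ y yC) a b aK bK (Eedge aK bK ab)).
exists P; split.
  move=> a b _ _ ab.
  case: (boolP (a \in C)) => aC; last exact: gen.
  case: (boolP (b \in C)) => bC; last by rewrite sqdistC lS; apply: gen; rewrite // adjS.
  rewrite /P aC bC /r; have [rQ _] := hQ x0 x0C.
  by apply: rQ; [exact: CK | exact: CK | exact: Eedge (CK _ aC) (CK _ bC) ab].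
case: (boolP (u \in C)) => uC.
  case: (boolP (v \in C)) => vC.
    by rewrite /P uC vC /r; apply: (proj2 (hQ x0 x0C)); exact: CK.
  have hvu : H v u by rewrite /add_edge !eqxx !orbT.
  have [y [yC -> -> vK uK]] := key v u hvu vC.
  by rewrite (proj1 (hTT y)) (proj2 (hQ y yC)).
have huv : H u v by rewrite /add_edge !eqxx /= orbT.
have [y [yC -> -> uK vK]] := key u v huv uC.
by rewrite (proj1 (hTT y)) (proj2 (hQ y yC)).
Qed.

End Main.

Unset Implicit Arguments.

Theorem mainTheorem8 (R : realType) (d : nat) (V : finType) (adj : rel V)
  (u v : V) (C : {set V}) :
  (1 <= d)%N ->
  symmetric adj -> irreflexive adj ->
  u != v -> ~~ adj u v ->
  clique_separator (add_edge adj u v) C ->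
  (SIP R d [set: V] adj u v <->
   forall x, x \notin C ->
     u \in Ccomp (add_edge adj u v) C x -> v \in Ccomp (add_edge adj u v) C x ->
     SIP R d (Ccomp (add_edge adj u v) C x)
       (induced_del (add_edge adj u v) (Ccomp (add_edge adj u v) C x) u v) u v).
Proof.
move=> d0 adjS _ _ nuv [clq [x0 [y0 [x0C _ _]]]]; split.
  by move=> h x _; apply: (dir1 adjS nuv d0 clq h).
by move=> h; apply: (dir2 adjS nuv clq (ex_intro _ x0 x0C) h).
Qed.
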